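(* Let $a, b \ge 2$ be even integers, at least one of which is not divisible by four. Then $R_\mathrm{cyc}(M_a^\mathrm{nest}, M_b^\mathrm{nest}) = a + b - 2$.
   Context: All graphs are finite, simple and undirected, and a graph of order $n$ has vertex set $\{0,1,\ldots,n-1\}$; $K_n$ is the complete graph on $\{0,\ldots,n-1\}$. A $2$-edge-coloring of $K_n$ assigns each edge a color in $\{1,2\}$. For a graph $H$ and such a coloring, an embedding of $H$ in color $j$ is an injective map $\varphi\colon V(H)\to V(K_n)$ such that for every edge $uv$ of $H$ the edge $\{\varphi(u),\varphi(v)\}$ has color $j$; it is increasing up to a cyclic permutation if there exists $t\in V(H)$ such that $(\varphi(t),\ldots,\varphi(|H|-1),\varphi(0),\ldots,\varphi(t-1))$ is increasing. The cyclic Ramsey number $R_\mathrm{cyc}(H_1,H_2)$ is the smallest $n$ such that every $2$-edge-coloring of $K_n$ admits an embedding of $H_1$ in color $1$ or of $H_2$ in color $2$ that is increasing up to a cyclic permutation. For even $n\ge2$, the nested matching $M_n^\mathrm{nest}$ is the graph of order $n$ whose edges are $\{v,n-1-v\}$ for $0\le v\le n/2-1$. *)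

(* Defs.v *)
From mathcomp Require Import all_boot.
Set Implicit Arguments. Unset Strict Implicit. Unset Printing Implicit Defensive.

(* A graph of order h has vertex set 'I_h = {0,...,h-1}; its edges are given
   by a symmetric relation E : rel 'I_h. *)

Definition nest_edge (h : nat) : rel 'I_h :=
  fun u v => ((val u < h./2) && (val v == h.-1 - val u))
          || ((val v < h./2) && (val u == h.-1 - val v)).

(* 2-edge-colorings of K_n: a symmetric map on pairs of vertices with
   values in 'I_2 (color 1 <-> ord0, color 2 <-> ord_max); the values on
   the diagonal are irrelevant. *)
Definition coloring (n : nat) := 'I_n -> 'I_n -> 'I_2.
Definition sym_coloring n (c : coloring n) : Prop :=
  forall x y, c x y = c y x.

Definition embedding_in_color h n (E : rel 'I_h) (c : coloring n)
    (j : 'I_2) (phi : 'I_h -> 'I_n) : Prop :=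
  injective phi /\ forall u v, E u v -> c (phi u) (phi v) = j.

(* increasing up to a cyclic permutation: there is t such that
   (phi t, ..., phi (h-1), phi 0, ..., phi (t-1)) is increasing *)
Definition cyc_increasing h n (phi : 'I_h -> 'I_n) : Prop :=
  exists t : 'I_h, forall u v : 'I_h,
    (val u + h - val t) %% h < (val v + h - val t) %% h ->
    val (phi u) < val (phi v).
(* Note: vertex u sits at position (u - t) mod h of the rotated sequence
   (t, ..., h-1, 0, ..., t-1). *)

Definition cyc_ramsey_prop h1 (E1 : rel 'I_h1) h2 (E2 : rel 'I_h2)
    (n : nat) : Prop :=
  forall c : coloring n, sym_coloring c ->
    (exists phi : 'I_h1 -> 'I_n,
        embedding_in_color E1 c ord0 phi /\ cyc_increasing phi) \/
    (exists phi : 'I_h2 -> 'I_n,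
        embedding_in_color E2 c ord_max phi /\ cyc_increasing phi).

Definition Rcyc_eq h1 (E1 : rel 'I_h1) h2 (E2 : rel 'I_h2) (N : nat) : Prop :=
  cyc_ramsey_prop E1 E2 N /\ forall m, m < N -> ~ cyc_ramsey_prop E1 E2 m.

(* Main.v *)
Require Import Defs.
From mathcomp Require Import all_boot zify.
Set Implicit Arguments. Unset Strict Implicit.

Lemma mod2 x h : x < h + h -> x %% h = if x < h then x else x - h.
Proof.
case: ifP => H1 H2; first by rewrite modn_small.
have -> : x = (x - h) + h by lia.
rewrite modnDr modn_small; lia.
Qed.

Lemma psi_ex h m (phi : 'I_h -> 'I_m) (t : 'I_h) :
  (forall u v : 'I_h, (nat_of_ord u + h - nat_of_ord t) %% h < (nat_of_ord v + h - nat_of_ord t) %% h ->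
      nat_of_ord (phi u) < nat_of_ord (phi v)) ->
  exists psi : nat -> nat,
    [/\ forall u : 'I_h, psi ((nat_of_ord u + h - nat_of_ord t) %% h) = nat_of_ord (phi u),
        forall p q, p <= q -> q < h -> psi p + (q - p) <= psi q
      & forall p, p < h -> psi p < m].
Proof.
move=> Hinc.
have Hh : 0 < h by have := ltn_ord t; lia.
pose vert p : 'I_h := Ordinal (ltn_pmod (p + nat_of_ord t) Hh).
have Ht := ltn_ord t.
have posv : forall p, p < h -> (nat_of_ord (vert p) + h - nat_of_ord t) %% h = p.
  move=> p Hp /=.
  rewrite (@mod2 (p + nat_of_ord t)); last lia.
  case: ifP => H1; rewrite mod2; try lia; case: ifP; lia.
have vpos : forall u : 'I_h, vert ((nat_of_ord u + h - nat_of_ord t) %% h) = u.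
  move=> u; apply: val_inj => /=; have Hu := ltn_ord u.
  rewrite (@mod2 (u + h - t)); last lia.
  case: ifP => H1; rewrite mod2; try lia; case: ifP; lia.
exists (fun p => nat_of_ord (phi (vert p))); split.
- by move=> u; rewrite vpos.
- move=> p q Hpq Hq.
  have step : forall r, r.+1 < h -> nat_of_ord (phi (vert r)) < nat_of_ord (phi (vert r.+1)).
    move=> r Hr; apply: Hinc; rewrite !posv //; lia.
  have : forall d, p + d < h -> nat_of_ord (phi (vert p)) + d <= nat_of_ord (phi (vert (p + d))).
    elim=> [|d IH] Hd; first by rewrite !addn0.
    have h1 : p + d < h by lia.
    have h2 : (p + d).+1 < h by lia.
    have := IH h1; have := step (p + d) h2.
    rewrite [p + d.+1]addnS; lia.
  have h3 : p + (q - p) < h by lia.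
  move=> /(_ (q - p) h3); have -> : p + (q - p) = q by lia. done.
- by move=> p _; apply: ltn_ord.
Qed.

Definition distn n0 x y := minn (x - y + (y - x)) (n0 - (x - y + (y - x))).
Lemma distn_ge n0 k x y : x <= y -> k <= distn n0 x y -> k <= y - x /\ k <= n0 - (y - x).
Proof. rewrite /distn => H; have -> : x - y = 0 by lia. rewrite add0n; lia. Qed.
Lemma distnC n0 x y : distn n0 x y = distn n0 y x.
Proof. by rewrite /distn addnC. Qed.
Lemma distn_ge' n0 k x y : y <= x -> k <= distn n0 x y -> k <= x - y /\ k <= n0 - (x - y).
Proof. by rewrite distnC; apply: distn_ge. Qed.

Lemma gap_lemma g n0 k (psi : nat -> nat) X1 Y1 X2 Y2 :
  (forall p q, p <= q -> q < g -> psi p + (q - p) <= psi q) ->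
  psi g.-1 < n0 -> X1 != X2 -> X1 < g -> X2 < g ->
  (Y1 = X1.+1 \/ X1 = g.-1 /\ Y1 = 0) ->
  (Y2 = X2.+1 \/ X2 = g.-1 /\ Y2 = 0) ->
  Y1 < g -> Y2 < g ->
  k <= distn n0 (psi X1) (psi Y1) -> k <= distn n0 (psi X2) (psi Y2) ->
  n0 + 3 = k.*2 + g -> False.
Proof.
move=> Hmono Hb.
wlog: X1 Y1 X2 Y2 / X1 < X2.
  move=> Hw H12 HX1 HX2 HY1 HY2 HY1g HY2g D1 D2 Hn.
  case: (ltngtP X1 X2) => H.
  - exact: (Hw X1 Y1 X2 Y2).
  - by apply: (Hw X2 Y2 X1 Y1) => //; rewrite eq_sym.
  - by rewrite H eqxx in H12.
move=> H12 _ HX1 HX2 HY1 HY2 HY1g HY2g.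
have H0 : psi 0 + X1 <= psi X1 by have := Hmono 0 X1 (leq0n _) HX1; lia.
case: HY1 => HY1; last lia.
have H1 : psi X1 <= psi Y1 by have := Hmono X1 Y1 ltac:(lia) HY1g; lia.
have H2 : psi Y1 + (X2 - Y1) <= psi X2 by have := Hmono Y1 X2 ltac:(lia) HX2; lia.
case: HY2 => HY2.
- have H3 : psi X2 <= psi Y2 by have := Hmono X2 Y2 ltac:(lia) HY2g; lia.
  have H4 : psi Y2 + (g.-1 - Y2) <= psi g.-1 by have := Hmono Y2 g.-1 ltac:(lia) ltac:(lia); lia.
  move=> /(@distn_ge _ _ _ _ H1) D1 /(@distn_ge _ _ _ _ H3) D2.
  clear Hmono; move: H0 H1 H2 H3 H4 D1 D2 Hb.
  set a := psi X1; set b := psi Y1; set c := psi X2; set d := psi Y2; set e := psi g.-1; set z := psi 0.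
  lia.
- case: HY2 => HX2e HY2e. rewrite HY2e HX2e.
  have H3 : psi 0 <= psi g.-1 by have := Hmono 0 g.-1 ltac:(lia) ltac:(lia); lia.
  move=> /(@distn_ge _ _ _ _ H1) D1 /(@distn_ge' _ _ _ _ H3) D2.
  rewrite HX2e in H2.
  clear Hmono; move: H0 H1 H2 H3 D1 D2 Hb.
  set a := psi X1; set b := psi Y1; set e := psi g.-1; set z := psi 0.
  lia.
Qed.

Lemma midA h k n0 (psi : nat -> nat) P Q :
  (forall p q, p <= q -> q < h -> psi p + (q - p) <= psi q) ->
  h = k.*2 -> psi h.-1 < n0 -> P < h -> Q < h -> Q = P + k ->
  distn n0 (psi P) (psi Q) <= k.-1 -> 0 < k -> False.
Proof.
move=> Hmono Hh Hb HP HQ HPQ.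
have H0P : P <= psi P.
  have := Hmono 0 P (leq0n _) HP; lia.
have H1 : psi P + k <= psi Q.
  have := Hmono P Q ltac:(lia) HQ; lia.
have H2 : psi Q + (h.-1 - Q) <= psi h.-1.
  have := Hmono Q h.-1 ltac:(lia) ltac:(lia); lia.
clear Hmono; rewrite /distn.
move: H0P H1 H2 Hb; set a := psi P; set b := psi Q; set e := psi h.-1.
lia.
Qed.

Lemma claimA k n0 m (c : coloring m) js (phi : 'I_(k.*2) -> 'I_m) :
  odd k -> m <= n0 ->
  (forall x y : 'I_m, c x y = js -> distn n0 x y <= k.-1) ->
  embedding_in_color (@nest_edge (k.*2)) c js phi -> cyc_increasing phi -> False.
Proof.
move=> Hk Hm Hc [_ Hemb] [t Hinc].
have [psi [Hpsi Hmono Hbnd]] := psi_ex Hinc.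
have Hvlt : k./2 < k.*2 by clear -Hk; lia.
have Hwlt : k./2 + k < k.*2 by clear -Hk; lia.
pose V : 'I_(k.*2) := Ordinal Hvlt.
pose W : 'I_(k.*2) := Ordinal Hwlt.
have E : nest_edge V W.
  rewrite /nest_edge /=; apply/orP; left; apply/andP; split; [clear -Hk; lia | apply/eqP; clear -Hk; lia].
have := Hc _ _ (Hemb _ _ E).
rewrite -(Hpsi V) -(Hpsi W) /=.
have Ht := ltn_ord t.
have [P [HP HPd]] : exists P, P < k.*2 /\ (k./2 + k.*2 - t) %% k.*2 = P.
  by exists ((k./2 + k.*2 - t) %% k.*2); split => //; apply: ltn_pmod; clear -Hk; lia.
have [Q [HQ HQd]] : exists Q, Q < k.*2 /\ (k./2 + k + k.*2 - t) %% k.*2 = Q.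
  by exists ((k./2 + k + k.*2 - t) %% k.*2); split => //; apply: ltn_pmod; clear -Hk; lia.
have HPQ : Q = P + k \/ P = Q + k.
  rewrite (@mod2 (k./2 + k.*2 - t)) in HPd; last by clear -Ht; lia.
  rewrite (@mod2 (k./2 + k + k.*2 - t)) in HQd; last by clear -Ht Hk; lia.
  move: HPd HQd; clear -Hk Ht HP HQ.
  by case: ifP => H1 H2; case: ifP => H3 H4; lia.
rewrite HPd HQd => D.
have Hk0 : 0 < k by clear -Hk; lia.
have Hb : psi (k.*2).-1 < n0.
  have : (k.*2).-1 < k.*2 by clear -Hk0; lia.
  move/Hbnd; clear -Hm; lia.
case: HPQ => HPQ.
- exact: (@midA (k.*2) k n0 psi P Q Hmono erefl Hb HP HQ HPQ D Hk0).
- rewrite distnC in D.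
  exact: (@midA (k.*2) k n0 psi Q P Hmono erefl Hb HQ HP HPQ D Hk0).
Qed.

Lemma claimB k l m (c : coloring m) jl (phi : 'I_(l.*2) -> 'I_m) :
  0 < k -> 0 < l -> m <= (k + l).*2 - 3 ->
  (forall x y : 'I_m, c x y = jl -> k <= distn ((k + l).*2 - 3) x y) ->
  embedding_in_color (@nest_edge (l.*2)) c jl phi -> cyc_increasing phi -> False.
Proof.
move=> Hk Hl Hm Hc [_ Hemb] [t Hinc].
have [psi [Hpsi Hmono Hbnd]] := psi_ex Hinc.
have Ht := ltn_ord t.
have L1 : l.-1 < l.*2 by clear -Hl; lia.
have L2 : l < l.*2 by clear -Hl; lia.
have L3 : 0 < l.*2 by clear -Hl; lia.
have L4 : (l.*2).-1 < l.*2 by clear -Hl; lia.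
pose U1 : 'I_(l.*2) := Ordinal L1.
pose W1 : 'I_(l.*2) := Ordinal L2.
pose U2 : 'I_(l.*2) := Ordinal L3.
pose W2 : 'I_(l.*2) := Ordinal L4.
have E1 : nest_edge U1 W1.
  rewrite /nest_edge /=; apply/orP; left; apply/andP; split; [clear -Hl; lia | apply/eqP; clear -Hl; lia].
have E2 : nest_edge W2 U2.
  rewrite /nest_edge /=; apply/orP; right; apply/andP; split; [clear -Hl; lia | apply/eqP; clear -Hl; lia].
have D1 := Hc _ _ (Hemb _ _ E1).
have D2 := Hc _ _ (Hemb _ _ E2).
move: D1 D2; rewrite -(Hpsi U1) -(Hpsi W1) -(Hpsi U2) -(Hpsi W2) /=.
have Hb : psi (l.*2).-1 < (k + l).*2 - 3.
  have := Hbnd _ L4; clear -Hm; lia.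
pose pos x := (x + l.*2 - t) %% l.*2.
have Hpos : forall x, x < l.*2 -> pos x = if x + l.*2 - t < l.*2 then x + l.*2 - t else x + l.*2 - t - l.*2.
  by move=> x Hx; rewrite /pos mod2 //; clear -Hx Ht; lia.
have Hposlt : forall x, pos x < l.*2 by move=> x; apply: ltn_pmod.
rewrite -/(pos l.-1) -/(pos l) -/(pos 0) -/(pos (l.*2).-1) => D1 D2.
apply: (@gap_lemma (l.*2) ((k + l).*2 - 3) k psi (pos l.-1) (pos l) (pos (l.*2).-1) (pos 0) Hmono Hb) => //.
- rewrite !Hpos //; clear -Hl Ht; repeat case: ifP; lia.
- rewrite !Hpos //; clear -Hl Ht; repeat case: ifP; lia.
- rewrite !Hpos //; clear -Hl Ht; repeat case: ifP; lia.
- clear -Hk Hl; lia.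
Qed.

Lemma select k M (p : pred nat) : k <= count p (iota 0 M) ->
  exists F : nat -> nat, [/\ forall v w, v < w -> w < k.*2 -> F v < F w,
     forall v, v < k.*2 -> F v < M.*2,
     forall v, v < k -> p (F v) & forall v, v < k -> F (k.*2 - 1 - v) = (M.*2).-1 - F v].
Proof.
move=> Hc.
set s := [seq i <- iota 0 M | p i].
have Hs : size s = count p (iota 0 M) by rewrite size_filter.
have Hsort : sorted ltn s by apply: sorted_filter; [exact: ltn_trans | exact: iota_ltn_sorted].
pose G j := nth 0 s j.
have Gin : forall j, j < k -> p (G j) /\ G j < M.
  move=> j Hj; have : G j \in s by apply: mem_nth; rewrite Hs; exact: leq_trans Hj Hc.
  by rewrite mem_filter mem_iota add0n => /andP [-> /andP [_ ->]].
have Ginc : forall i j, i < j -> j < k -> G i < G j.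
  move=> i j Hij Hj; apply: (sorted_ltn_nth ltn_trans 0 Hsort) => //; rewrite inE; lia.
exists (fun v => if v < k then G v else (M.*2).-1 - G (k.*2 - 1 - v)); split.
- move=> v w Hvw Hw.
  case: ifP => Hv; case: ifP => Hw'.
  + exact: Ginc.
  + have := Gin v Hv; have := Gin (k.*2 - 1 - w) ltac:(lia). lia.
  + lia.
  + have := Ginc (k.*2 - 1 - w) (k.*2 - 1 - v) ltac:(lia) ltac:(lia).
    have := Gin (k.*2 - 1 - v) ltac:(lia). lia.
- move=> v Hv; case: ifP => Hv'.
  + have := Gin v Hv'; lia.
  + have := Gin (k.*2 - 1 - v) ltac:(lia); lia.
- by move=> v Hv; rewrite Hv; case: (Gin v Hv).
- move=> v Hv; have -> : (k.*2 - 1 - v < k) = false by lia.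
  have -> : k.*2 - 1 - (k.*2 - 1 - v) = v by lia.
  by rewrite Hv.
Qed.

Lemma upper_side k M n' (c : coloring n'.+1) (j : 'I_2) :
  sym_coloring c -> 0 < k -> n'.+1 = M.*2 ->
  k <= count (fun i => c (inord i) (inord (n' - i)) == j) (iota 0 M) ->
  exists phi : 'I_(k.*2) -> 'I_n'.+1,
    embedding_in_color (@nest_edge (k.*2)) c j phi /\ cyc_increasing phi.
Proof.
move=> Hsym Hk HM Hcnt.
have [F [Finc Fbnd Fp Fsym]] := select Hcnt.
have HF : forall v : 'I_(k.*2), F v < n'.+1 by move=> v; rewrite HM; apply: Fbnd.
exists (fun v => inord (F v)).
have Hval : forall v : 'I_(k.*2), nat_of_ord (inord (F v) : 'I_n'.+1) = F v.
  by move=> v; rewrite inordK.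
split; first split.
- move=> u v /(congr1 val) /=; rewrite !Hval => Huv.
  apply: val_inj => /=; case: (ltngtP u v) => // H.
  + by have := Finc _ _ H (ltn_ord v); rewrite Huv ltnn.
  + by have := Finc _ _ H (ltn_ord u); rewrite Huv ltnn.
- move=> u v; rewrite /nest_edge /= => /orP [] /andP [Hu /eqP Hv].
  + have Hu' : u < k by move: Hu; clear; lia.
    have := Fp _ Hu'; rewrite Hv.
    have -> : (k.*2).-1 - u = k.*2 - 1 - u by lia.
    rewrite Fsym //; have -> : (M.*2).-1 = n' by lia.
    by move/eqP.
  + have Hv' : v < k by move: Hu; clear; lia.
    rewrite Hsym; have := Fp _ Hv'; rewrite Hv.
    have -> : (k.*2).-1 - v = k.*2 - 1 - v by lia.
    rewrite Fsym //; have -> : (M.*2).-1 = n' by lia.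
    by move/eqP.
- have Hk2 : 0 < k.*2 by lia.
  exists (Ordinal Hk2) => u v /=.
  rewrite !subn0 !modnDr !modn_small // => Huv.
  rewrite !Hval; exact: Finc.
Qed.

Lemma ord2_neq0 (x : 'I_2) : (x != ord0) = (x == ord_max).
Proof. by case: x => [[|[|]]] //. Qed.

Lemma upper k l n : 0 < k -> 0 < l -> n = k.*2 + l.*2 - 2 ->
  cyc_ramsey_prop (@nest_edge (k.*2)) (@nest_edge (l.*2)) n.
Proof.
move=> Hk Hl Hn c Hsym.
case: n Hn c Hsym => [|n'] Hn c Hsym; first by lia.
have HM : n'.+1 = (k + l - 1).*2 by lia.
set p := (fun i => c (inord i) (inord (n' - i)) == ord0).
have Hcnt := count_predC p (iota 0 (k + l - 1)).
rewrite size_iota in Hcnt.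
case: (leqP k (count p (iota 0 (k + l - 1)))) => H.
- left; exact: (upper_side Hsym Hk HM H).
- right.
  have H2 : l <= count (fun i => c (inord i) (inord (n' - i)) == ord_max) (iota 0 (k + l - 1)).
    rewrite -(eq_count (a1 := predC p)); first lia.
    by move=> i /=; rewrite /p ord2_neq0.
  exact: (upper_side Hsym Hl HM H2).
Qed.

Definition dcol m n0 T (js jl : 'I_2) : coloring m :=
  fun x y => if distn n0 x y <= T then js else jl.
Arguments dcol : clear implicits.

Lemma dcol_sym m n0 T js jl : sym_coloring (dcol m n0 T js jl).
Proof. by move=> x y; rewrite /dcol distnC. Qed.

Lemma lower k l m : 0 < k -> 0 < l -> (odd k \/ odd l) -> m < k.*2 + l.*2 - 2 ->
  ~ cyc_ramsey_prop (@nest_edge (k.*2)) (@nest_edge (l.*2)) m.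
Proof.
move=> Hk Hl Hodd Hm.
have ne : (ord0 : 'I_2) != ord_max by [].
case: Hodd => Ho.
- move/(_ (dcol m ((k + l).*2 - 3) k.-1 ord0 ord_max) (@dcol_sym _ _ _ _ _)).
  case=> [[phi [He Hc]]|[phi [He Hc]]].
  + apply: (@claimA k ((k + l).*2 - 3) m _ ord0 phi Ho _ _ He Hc); first lia.
    by move=> x y; rewrite /dcol; case: ifP => // _ /eqP; rewrite eq_sym (negbTE ne).
  + apply: (@claimB k l m _ ord_max phi Hk Hl _ _ He Hc); first lia.
    move=> x y; rewrite /dcol; case: ifP => [_ /eqP|]; first by rewrite (negbTE ne).
    move=> /negbT; rewrite -ltnNge => H _; lia.
- move/(_ (dcol m ((l + k).*2 - 3) l.-1 ord_max ord0) (@dcol_sym _ _ _ _ _)).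
  case=> [[phi [He Hc]]|[phi [He Hc]]].
  + apply: (@claimB l k m _ ord0 phi Hl Hk _ _ He Hc); first lia.
    move=> x y; rewrite /dcol; case: ifP => [_ /eqP|]; first by rewrite eq_sym (negbTE ne).
    move=> /negbT; rewrite -ltnNge => H _; lia.
  + apply: (@claimA l ((l + k).*2 - 3) m _ ord_max phi Ho _ _ He Hc); first lia.
    by move=> x y; rewrite /dcol; case: ifP => // _ /eqP; rewrite (negbTE ne).
Qed.

Theorem theorem4p29 (a b : nat) :
  2 <= a -> 2 <= b -> ~~ odd a -> ~~ odd b ->
  (~~ (4 %| a) \/ ~~ (4 %| b)) ->
  Rcyc_eq (@nest_edge a) (@nest_edge b) (a + b - 2).
Proof.
move=> Ha Hb Hoa Hob H4.
have Hka : a = (a./2).*2 by lia.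
have Hkb : b = (b./2).*2 by lia.
have Hodd : odd a./2 \/ odd b./2 by lia.
have Hk : 0 < a./2 by lia.
have Hl : 0 < b./2 by lia.
move: (a./2) (b./2) Hka Hkb Hodd Hk Hl => k l -> -> Hodd Hk Hl.
split.
- exact: upper.
- move=> m Hm; exact: lower.
Qed.
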